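(* $w(\mathsf{T_f}(2))\ge\omega+1$.
   Context: $2$ denotes the two-element chain $0<1$. Trees: for a non-empty quasi-order $Q$, $\mathsf{T_f}(Q)$ is the smallest class containing the leaf $\cdot q$ for each $q\in Q$, and containing $\cdot(\tau_0,\dots,\tau_{k-1})$ (an unlabelled root whose children are the $\tau_i$) for every finite set $\{\tau_0,\dots,\tau_{k-1}\}\subseteq\mathsf{T_f}(Q)$ with $k\ge1$. Its order $\le_T$ is defined recursively: - $\cdot x\le_T\cdot y$ iff $x\le_Q y$; - $\cdot x\le_T\cdot(\tau_j)_{j<l}$ iff $\cdot x\le_T\tau_j$ for some $j$; - $\cdot(\sigma_i)_{i<k}\le_T\cdot(\tau_j)_{j<l}$ iff every $\sigma_i$ is $\le_T$ some $\tau_j$; - a non-leaf tree is never $\le_T$ a leaf. Width: for a well-quasi-order $P$, $w(P)=\sup_{x\in P}(w(L_\bot(x))+1)$, where $L_\bot(x)=\{y\in P: x\not\le y\text{ and }y\not\le x\}$ carries the induced order. This is a well-founded recursion. *)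

(* Defs.v *)
From mathcomp Require Import all_boot.
Set Implicit Arguments. Unset Strict Implicit. Unset Printing Implicit Defensive.

Inductive ord : Type :=
| OZ : ord
| OS : ord -> ord
| OL : (nat -> ord) -> ord.   (* sup_n f n *)

Fixpoint ofin (n : nat) : ord := if n is m.+1 then OS (ofin m) else OZ.
Definition omega : ord := OL ofin.

(* For a quasi-order (T, le) restricted to the carrier A,
   width_ge le A a  <->  w(A) >= a, where
   w(P) = sup_{x in P} (w(L_bot(x)) + 1). *)
Section Width.
Variables (T : Type) (le : T -> T -> Prop).

Definition Lbot (A : T -> Prop) (x : T) : T -> Prop :=
  fun y => A y /\ ~ le x y /\ ~ le y x.

Fixpoint width_ge (A : T -> Prop) (a : ord) : Prop :=
  match a with
  | OZ => True
  | OS b => exists x, A x /\ width_ge (Lbot A x) b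
  | OL f => forall n, width_ge A (f n)
  end.
End Width.

(* Labels in 2 = {0 < 1} are booleans (false = 0, true = 1). *)
Inductive tree : Type :=
| Leaf : bool -> tree
| Node : seq tree -> tree.

(* a tree is in T_f(2) iff every internal node has at least one child *)
Fixpoint wf_tree (t : tree) : Prop :=
  match t with
  | Leaf _ => True
  | Node ts => ts <> [::] /\
      (fix allwf (l : seq tree) : Prop :=
         match l with [::] => True | s :: l' => wf_tree s /\ allwf l' end) ts
  end.

Definition le2 (x y : bool) : bool := x ==> y.

Fixpoint leaf_le (x : bool) (t : tree) : bool :=
  match t with
  | Leaf y => le2 x y
  | Node ts =>
      (fix ex (l : seq tree) : bool :=
         match l with [::] => false | u :: l' => leaf_le x u || ex l' end) ts
  end.

Fixpoint tree_le (s t : tree) : bool :=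
  match s with
  | Leaf x => leaf_le x t
  | Node ss =>
      match t with
      | Leaf _ => false
      | Node ts =>
          (fix al (l : seq tree) : bool :=
             match l with
             | [::] => true
             | s' :: l' => has (tree_le s') ts && al l'
             end) ss
      end
  end.

(* Main.v *)
Require Import Defs.
From mathcomp Require Import all_boot.
From mathcomp Require Import zify.

Fixpoint Zt (k : nat) : tree := if k is j.+1 then Node [:: Zt j] else Leaf false.

Lemma wf_Zt k : wf_tree (Zt k).
Proof. elim: k => [|k IH] //=. Qed.

Lemma leafT_Zt k : leaf_le true (Zt k) = false.
Proof. elim: k => [|k IH] //=; by rewrite IH. Qed.

Lemma leafF_Zt k : leaf_le false (Zt k) = true.
Proof. elim: k => [|k IH] //=; by rewrite IH. Qed.

Lemma Zt_leaf k b : tree_le (Zt k) (Leaf b) = (k == 0).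
Proof. by case: k. Qed.

Lemma ZZ a b : tree_le (Zt a) (Zt b) = (a <= b).
Proof.
elim: a b => [|a IH] [|b] //=.
- by rewrite leafF_Zt.
- by rewrite IH orbF andbT.
Qed.

Definition c1 k := Node [:: Leaf true; Zt k].

Lemma c1c1 k m : tree_le (c1 k) (c1 m) = (k == 0) || (k <= m).
Proof. by rewrite /c1 /= Zt_leaf ZZ orbF andbT. Qed.

Lemma c1Z k j : tree_le (c1 k) (Zt j) = false.
Proof. case: j => [|j] //=. by rewrite leafT_Zt. Qed.

Lemma Zc1 a m : tree_le (Zt a.+1) (c1 m) = (a == 0) || (a <= m).
Proof. by rewrite /c1 /= Zt_leaf ZZ orbF andbT. Qed.

Lemma NN a b c d : tree_le (Node [:: a; b]) (Node [:: c; d]) =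
  (tree_le a c || tree_le a d) && (tree_le b c || tree_le b d).
Proof. by rewrite /= !orbF !andbT. Qed.

Definition tk n k := Node [:: c1 k; Zt (n - k + n).+3].

Lemma tk_le n k m : k < n -> m < n -> tree_le (tk n k) (tk n m) -> k = m.
Proof.
move=> hk hm; rewrite /tk NN c1c1 c1Z Zc1 ZZ !orbF.
move=> /andP[/orP[/eqP E|H1] /orP[/orP[/eqP E'|H2]|H3]]; lia.
Qed.

Definition x0 := Node [:: Node [:: Node [:: Leaf true]]].


Lemma wg (T : Type) (le : T -> T -> Prop) (f : nat -> T) n : forall A,
  (forall i, i < n -> A (f i)) ->
  (forall i j, i < n -> j < n -> i <> j -> ~ le (f i) (f j)) ->
  width_ge le A (ofin n).
Proof.
elim: n => [|n IH] A HA Hle //=.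
exists (f n); split; first exact: HA.
apply: IH.
- move=> i hi; split; first by apply: HA; lia.
  split; apply: Hle; lia.
- move=> i j hi hj hij; apply: Hle; lia.
Qed.

Theorem lemma3p22 :
  width_ge (fun s t : tree => tree_le s t) wf_tree (OS omega).
Proof.
exists x0; split; first by rewrite /x0 /=.
move=> n; apply: (@wg _ _ (tk n)).
- move=> i hi; split; last split.
  + rewrite /tk /=; repeat split => //; exact: wf_Zt.
  + rewrite /tk /x0 /= /c1 /= !leafT_Zt /=.
    by case: i hi => [|i] hi //=; rewrite ?leafT_Zt.
  + by rewrite /tk /x0 /= andbF.
- move=> i' j hi hj hij H. exact: hij (tk_le _ _ _ hi hj H).
Qed.
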